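(* Consider the switched discrete-time system $$x[k+1]=Ax[k]+\sigma[k]Bu[k]+(1-\sigma[k])d[k]+w[k],\qquad y[k]=x[k]+v[k],$$ with $x[k]\in\mathbb{R}^n$, $u[k]\in\mathbb{R}^m$, $d[k]\in\mathcal{D}$, $w[k]\in\mathcal{W}$, $v[k]\in\mathcal{V}$ arbitrary within their sets, $\sigma[k]\in\{0,1\}$, and sets $\mathcal{U}$, $\mathcal{S}\subset\mathcal{X}$ satisfying the standing assumptions in the context. Let $(A_K,B_K,C_K,D_K)$ be a controller realization with state dimension $n_K$ such that $A_{CL}=\begin{bmatrix}A+BD_K & BC_K\\ B_K & A_K\end{bmatrix}$ is Schur, and let polyhedral $\Omega_I\subset\mathbb{R}^n$, $\Omega_O\subset\mathbb{R}^{n+n_K}$ containing the respective origins satisfy I1)–I3) and O1)–O4) (with respect to this realization). Let $\mathbf{K}(z):=C_K(zI_{n_K}-A_K)^{-1}B_K+D_K$, and let $(A_K',B_K',C_K',D_K')$ be any other state-space realization of $\mathbf{K}(z)$ (of any state dimension). Then, if $x[k_0]\in\mathcal{S}_c$ and Algorithm 1 is applied with its Control step (and its controller-state resets to zero) using the realization $(A_K',B_K',C_K',D_K')$ instead of $(A_K,B_K,C_K,D_K)$, the following still hold: (a) $x[k]\in\mathcal{X}$ and $u[k]\in\mathcal{U}$ for all $k\ge k_0$; (b) there exists $T_{\max}\in\mathbb{N}_{>0}$ such that if $\sigma[k_0]=1$ then $\sigma[k_0+T_0]=0$ for some $T_0\in\{1,\dots,T_{\max}\}$, and for every $k>k_0$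 with $\sigma[k]=1$, $\sigma[k-1]=0$, there is $T\in\{1,\dots,T_{\max}\}$ with $\sigma[k+T]=0$; (c) for all $k\ge k_0$, $\sigma[k]=0$ implies $x[k]\in\mathcal{S}$.
   Context: Notation: $\oplus$ Minkowski sum, $\ominus$ Pontryagin difference, $(-\mathcal{X})=\{-x:x\in\mathcal{X}\}$, $\mathrm{conv}$ convex hull, $\|\cdot\|$ Euclidean / induced 2-norm. Standing assumptions: $\mathcal{D},\mathcal{W},\mathcal{V},\mathcal{S},\mathcal{X}\subset\mathbb{R}^n$ and $\mathcal{U}\subset\mathbb{R}^m$ are polytopes containing the origin in their interiors; $\mathcal{S}\subset\mathcal{X}$; there exist $\varepsilon_p,\varepsilon_m\in(0,1)$ with $\mathcal{V}\subseteq\varepsilon_p\mathcal{S}$, $(-\mathcal{V})\subseteq\varepsilon_m\mathcal{S}$; some closed Euclidean ball of positive radius centered at $0$ lies in $\mathcal{S}$; $\mathcal{S}^+:=A\mathcal{S}\oplus\mathcal{W}\oplus\mathcal{D}\subseteq\mathcal{X}$. Define $\mathcal{S}_c:=\mathrm{conv}(\mathcal{S},\mathcal{S}^+)$, $\mathcal{Z}:=\mathcal{W}\times\mathcal{V}$, $\mathcal{N}:=(-\mathcal{V})\oplus\mathcal{V}$, $B_{CL}=\begin{bmatrix}I_n & BD_K\\ O & B_K\end{bmatrix}$, $C_{CL}=[D_K\ C_K]$, $D_{CL}=[O\ D_K]$. Conditions: I1) $\Omega_I\subseteq\varepsilon_s\mathcal{S}$ for a given $\varepsilon_s\in(0,1)$;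 I2) there is $\alpha>0$ with $\{r:\|r\|\le\alpha\}\subseteq\Omega_I\ominus\mathcal{N}$; I3) there is $\beta\in(0,1)$ with $\bigoplus_{i=0}^N[I_n\ O]A_{CL}^iB_{CL}\mathcal{Z}\subseteq\beta(\Omega_I\ominus\mathcal{N})$ for all $N\in\mathbb{N}$; O1) $\mathcal{S}_c\times\{0_{n_K}\}\subseteq\Omega_O$; O2) $A_{CL}\Omega_O\oplus B_{CL}\mathcal{Z}\subseteq\Omega_O$; O3) $[I_n\ O]\Omega_O\subseteq\mathcal{X}$; O4) $C_{CL}\Omega_O\oplus D_{CL}\mathcal{Z}\subseteq\mathcal{U}$. Algorithm 1 (with a controller realization $(\hat A,\hat B,\hat C,\hat D)$ of state $\hat x_K$). Initialization: read $y[k_0]$; if $y[k_0]\in\mathcal{S}\ominus(-\mathcal{V})$, set $\sigma[k_0]=0$, $u[k_0]=0$, $k=k_0+1$, go to Monitoring; else set $k=k_0$, $\sigma[k]=1$, $\hat x_K[k]=0$, go to Control. Monitoring: read $y[k]$. If $y[k]\in\mathcal{S}\ominus(-\mathcal{V})$: if $\sigma[k-1]=1$ and $y[k]\notin\Omega_I\ominus(-\mathcal{V})$, set $\sigma[k]=1$ and go to Control; else set $\sigma[k]=0$, $u[k]=0$, increment $k$, go to Monitoring. Otherwise: if $\sigma[k-1]=0$ set $\hat x_K[k]=0$; set $\sigma[k]=1$ and go to Control. Control: $u[k]=\hat C\hat x_K[k]+\hat D y[k]$, $\hat x_K[k+1]=\hat A\hat x_K[k]+\hat By[k]$, increment $k$,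 go to Monitoring. *)

(* Defs.v *)
From mathcomp Require Import all_boot all_algebra.
From mathcomp Require Import boolp classical_sets reals.
From mathcomp Require Import complex.

Set Implicit Arguments.
Unset Strict Implicit.
Unset Printing Implicit Defensive.

Import GRing.Theory Num.Theory.
Local Open Scope ring_scope.
Local Open Scope classical_set_scope.

Section SetOps.
Variable R : realType.

Definition enorm n (x : 'cV[R]_n) : R := Num.sqrt (\sum_i (x i 0) ^+ 2).

Definition polyhedron n (P : set 'cV[R]_n) : Prop :=
  exists (k : nat) (H : 'M[R]_(k, n)) (h : 'cV[R]_k),
    P = [set x | forall i, (H *m x) i 0 <= h i 0].

Definition bounded_set n (P : set 'cV[R]_n) : Prop :=
  exists M : R, forall x, P x -> enorm x <= M.

Definition polytope n (P : set 'cV[R]_n) : Prop := polyhedron P /\ bounded_set P.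

Definition cball0 n (r : R) : set 'cV[R]_n := [set x | enorm x <= r].

Definition zero_in_interior n (P : set 'cV[R]_n) : Prop :=
  exists2 r : R, 0 < r & @cball0 n r `<=` P.

Definition msum n (X Y : set 'cV[R]_n) : set 'cV[R]_n :=
  [set z | exists x y, [/\ X x, Y y & z = x + y]].

Definition pdiff n (X Y : set 'cV[R]_n) : set 'cV[R]_n :=
  [set z | forall y, Y y -> X (z + y)].

Definition setneg n (X : set 'cV[R]_n) : set 'cV[R]_n := [set - x | x in X].

Definition sscale n (c : R) (X : set 'cV[R]_n) : set 'cV[R]_n := [set c *: x | x in X].

Definition mimage p q (M : 'M[R]_(p, q)) (X : set 'cV[R]_q) : set 'cV[R]_p :=
  [set M *m x | x in X].

Definition conv n (X : set 'cV[R]_n) : set 'cV[R]_n :=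
  [set z | exists (k : nat) (a : 'I_k -> R) (p : 'I_k -> 'cV[R]_n),
     [/\ forall i, 0 <= a i, \sum_i a i = 1, forall i, X (p i)
       & z = \sum_i a i *: p i]].

Definition sprod p q (X : set 'cV[R]_p) (Y : set 'cV[R]_q) : set 'cV[R]_(p + q) :=
  [set col_mx x y | x in X & y in Y].

Fixpoint msum_iter n (F : nat -> set 'cV[R]_n) (N : nat) : set 'cV[R]_n :=
  match N with
  | 0 => F 0%N
  | N'.+1 => msum (msum_iter F N') (F N)
  end.

Definition schur n (M : 'M[R]_n) : Prop :=
  forall z : R[i], eigenvalue (map_mx (fun r => (r%:C)%C) M) z -> `|z| < 1.

Definition tfun p q k (A : 'M[R]_k) (B : 'M[R]_(k, q)) (C : 'M[R]_(p, k))
    (D : 'M[R]_(p, q)) (z : R[i]) : 'M[R[i]]_(p, q) :=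
  map_mx (fun r => (r%:C)%C) C
    *m invmx (z%:M - map_mx (fun r => (r%:C)%C) A) *m map_mx (fun r => (r%:C)%C) B
  + map_mx (fun r => (r%:C)%C) D.

(* Two realizations have the same transfer matrix K(z) (as rational functions):
   they agree at every z where both resolvents are defined. *)
Definition same_tf p q k k' (A : 'M[R]_k) (B : 'M[R]_(k, q)) (C : 'M[R]_(p, k))
    (D : 'M[R]_(p, q)) (A' : 'M[R]_k') (B' : 'M[R]_(k', q)) (C' : 'M[R]_(p, k'))
    (D' : 'M[R]_(p, q)) : Prop :=
  forall z : R[i],
    (z%:M - map_mx (fun r => (r%:C)%C) A) \in unitmx ->
    (z%:M - map_mx (fun r => (r%:C)%C) A') \in unitmx ->
    tfun A B C D z = tfun A' B' C' D' z.

End SetOps.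

Section Algorithm1.
Variables (R : realType) (n m nh : nat).
Variables (A : 'M[R]_n) (B : 'M[R]_(n, m)).
Variables (Ah : 'M[R]_nh) (Bh : 'M[R]_(nh, n)) (Ch : 'M[R]_(m, nh)) (Dh : 'M[R]_(m, n)).
Variables (S V OmegaI : set 'cV[R]_n).
Variables (d w v : nat -> 'cV[R]_n).
Variables (k0 : nat) (x0 : 'cV[R]_n).

Definition SmV := pdiff S (setneg V).
Definition OmV := pdiff OmegaI (setneg V).

(* switching decision sigma[k] given sigma[k-1] = sp and measurement y[k]
   (the Initialization step coincides with the Monitoring step with sp = 0) *)
Definition a1_sigma (sp : bool) (y : 'cV[R]_n) : bool :=
  if y \in SmV then sp && (y \notin OmV) else true.

Definition a1_xh_used (sp : bool) (xh : 'cV[R]_nh) : 'cV[R]_nh :=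
  if sp then xh else 0.

Definition a1_input (sp : bool) (xh : 'cV[R]_nh) (y : 'cV[R]_n) : 'cV[R]_m :=
  if a1_sigma sp y then Ch *m a1_xh_used sp xh + Dh *m y else 0.

(* one step at (absolute) time k; state = (x[k], xhat_K[k], sigma[k-1]) *)
Definition a1_step (k : nat) (st : 'cV[R]_n * 'cV[R]_nh * bool) :
    'cV[R]_n * 'cV[R]_nh * bool :=
  let: (x, xh, sp) := st in
  let y := x + v k in
  let s := a1_sigma sp y in
  let u := a1_input sp xh y in
  let xh' := if s then Ah *m a1_xh_used sp xh + Bh *m y else xh in
  let x' := A *m x + (s%:R : R) *: (B *m u) + (1 - (s%:R : R)) *: d k + w k in
  (x', xh', s).

(* state at time k0 + j *)
Fixpoint a1_run (j : nat) : 'cV[R]_n * 'cV[R]_nh * bool :=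
  match j with
  | 0 => (x0, 0, false)
  | j'.+1 => a1_step (k0 + j') (a1_run j')
  end.

(* the signals, for k >= k0 *)
Definition a1_x (k : nat) : 'cV[R]_n := (a1_run (k - k0)).1.1.
Definition a1_prev (k : nat) : bool := (a1_run (k - k0)).2.
Definition a1_xh (k : nat) : 'cV[R]_nh := (a1_run (k - k0)).1.2.
Definition a1_y (k : nat) : 'cV[R]_n := a1_x k + v k.
Definition a1_sig (k : nat) : bool := a1_sigma (a1_prev k) (a1_y k).
Definition a1_u (k : nat) : 'cV[R]_m := a1_input (a1_prev k) (a1_xh k) (a1_y k).

End Algorithm1.

Section ClosedLoop.
Variables (R : realType) (n m nK : nat).
Variables (A : 'M[R]_n) (B : 'M[R]_(n, m)).
Variables (AK : 'M[R]_nK) (BK : 'M[R]_(nK, n)) (CK : 'M[R]_(m, nK)) (DK : 'M[R]_(m, n)).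

Definition A_CL : 'M[R]_(n + nK) := block_mx (A + B *m DK) (B *m CK) BK AK.
Definition B_CL : 'M[R]_(n + nK, n + n) := block_mx (1%:M : 'M[R]_n) (B *m DK) 0 BK.
Definition C_CL : 'M[R]_(m, n + nK) := row_mx DK CK.
Definition D_CL : 'M[R]_(m, n + n) := row_mx (0 : 'M[R]_(m, n)) DK.
Definition proj_x : 'M[R]_(n, n + nK) := row_mx (1%:M : 'M[R]_n) (0 : 'M[R]_(n, nK)).
End ClosedLoop.

Definition Splus (R : realType) n (A : 'M[R]_n) (S W D : set 'cV[R]_n) :=
  msum (msum (mimage A S) W) D.
Definition Sconv (R : realType) n (A : 'M[R]_n) (S W D : set 'cV[R]_n) :=
  conv (S `|` Splus A S W D).
Definition Zset (R : realType) n (W V : set 'cV[R]_n) := sprod W V.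
Definition Nset (R : realType) n (V : set 'cV[R]_n) := msum (setneg V) V.

(* Main.v *)
Require Import Defs.
From mathcomp Require Import all_boot all_algebra.
From mathcomp Require Import boolp classical_sets reals.
From mathcomp Require Import complex.
Import GRing.Theory Num.Theory.
Local Open Scope ring_scope.
Local Open Scope classical_set_scope.
From mathcomp Require Import zify ring lra order.
Import Order.TTheory.
Set Implicit Arguments.
Unset Strict Implicit.
Unset Printing Implicit Defensive.

Section Res.
Variable F : fieldType.

Lemma CH_sum k (A : 'M[F]_k) : \sum_(i < k.+1) (char_poly A)`_i *: A ^+ i = 0.
Proof.
case: k A => [|k] A; first by rewrite flatmx0.
apply: (etrans _ (Cayley_Hamilton A)).
rewrite -[char_poly A in RHS]coefK poly_def rmorph_sum size_char_poly.
apply: eq_bigr => i _.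
by rewrite -[RHS]/(horner_mx A _) horner_mxZ rmorphXn /= horner_mx_X.
Qed.

Lemma geo k (A : 'M[F]_k) (z : F) i :
  (z%:M - A) *m (\sum_(a < i) z ^+ a *: A ^+ (i.-1 - a)) = z ^+ i *: 1%:M - A ^+ i.
Proof.
elim: i => [|i IH]; first by rewrite big_ord0 mulmx0 !expr0 scale1r subrr.
rewrite big_ord_recl /= expr0 scale1r subn0.
have e : forall a : 'I_i, (i - (lift ord0 a) = i.-1 - a)%N.
  by move=> a; rewrite /= /bump /=; lia.
under eq_bigr => a _ do rewrite e exprS -scalerA.
rewrite -scaler_sumr mulmxDr -scalemxAr IH mulmxBl mul_scalar_mx.
have -> : A *m A ^+ i = A ^+ i.+1 by rewrite exprS.
rewrite scalerBr scalerA -exprS.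
by rewrite addrC addrA subrK.
Qed.

Definition Gm k (A : 'M[F]_k) (z : F) : 'M[F]_k :=
  \sum_(i < k.+1) (char_poly A)`_i *: \sum_(a < i) z ^+ a *: A ^+ (i.-1 - a).

Lemma GmE k (A : 'M[F]_k) z : (z%:M - A) *m Gm A z = (char_poly A).[z] *: 1%:M.
Proof.
rewrite /Gm mulmx_sumr.
under eq_bigr => i _ do rewrite -scalemxAr geo scalerBr scalerA.
rewrite sumrB CH_sum subr0 -scaler_suml horner_coef size_char_poly.
by congr (_ *: _); apply: eq_bigr.
Qed.

Lemma inv_res k (A : 'M[F]_k) z : (char_poly A).[z] != 0 ->
  (z%:M - A) \in unitmx /\ invmx (z%:M - A) = ((char_poly A).[z])^-1 *: Gm A z.
Proof.
move=> nz.
have h : (z%:M - A) *m (((char_poly A).[z])^-1 *: Gm A z) = 1%:M.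
  by rewrite -scalemxAr GmE scalerA mulVf // scale1r.
have [u _] := mulmx1_unit h; split => //.
by rewrite -[invmx _]mulmx1 -h mulmxA mulVmx // mul1mx.
Qed.

Definition Ncoef k (A : 'M[F]_k) p q (L : 'M[F]_(p, k)) (Rm : 'M[F]_(k, q)) r c (a : nat) :=
  \sum_(i < k.+1) (if (a < i)%N then (char_poly A)`_i * (L *m A ^+ (i.-1 - a) *m Rm) r c else 0).

Definition Npoly k (A : 'M[F]_k) p q (L : 'M[F]_(p, k)) (Rm : 'M[F]_(k, q)) r c :=
  \poly_(a < k) Ncoef A L Rm r c a.

Lemma NpolyE k (A : 'M[F]_k) p q (L : 'M[F]_(p, k)) (Rm : 'M[F]_(k, q)) r c z :
  (L *m Gm A z *m Rm) r c = (Npoly A L Rm r c).[z].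
Proof.
rewrite /Npoly horner_poly /Ncoef /Gm.
under [RHS]eq_bigr => a _ do rewrite mulr_suml.
rewrite [RHS]exchange_big /= mulmx_sumr mulmx_suml summxE.
apply: eq_bigr => i _.
rewrite -scalemxAr -scalemxAl mxE mulmx_sumr mulmx_suml summxE mulr_sumr.
have ik : (i <= k)%N by rewrite -ltnS ltn_ord.
rewrite (big_ord_widen k (fun a => (char_poly A)`_i * (L *m (z ^+ a *: A ^+ (i.-1 - a)) *m Rm) r c) ik).
rewrite big_mkcond /=.
apply: eq_bigr => a _; case: ifP => _; last by rewrite mul0r.
rewrite -scalemxAr -scalemxAl mxE.
by rewrite mulrCA mulrC.
Qed.

Lemma ratE k (A : 'M[F]_k) p q (L : 'M[F]_(p, k)) (Rm : 'M[F]_(k, q)) r c z :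
  (char_poly A).[z] != 0 ->
  (L *m invmx (z%:M - A) *m Rm) r c = (Npoly A L Rm r c).[z] / (char_poly A).[z].
Proof.
move=> nz; have [_ ->] := inv_res nz.
by rewrite -scalemxAr -scalemxAl mxE NpolyE mulrC.
Qed.

Lemma size_Npoly k (A : 'M[F]_k) p q (L : 'M[F]_(p, k)) (Rm : 'M[F]_(k, q)) r c :
  (size (Npoly A L Rm r c) <= k)%N.
Proof. exact: size_poly. Qed.

Lemma zres k (A : 'M[F]_k) z : (z%:M - A) \in unitmx ->
  z *: invmx (z%:M - A) = 1%:M + invmx (z%:M - A) *m A.
Proof.
move=> u.
have : invmx (z%:M - A) *m (z%:M - A) = 1%:M by rewrite mulVmx.
rewrite mulmxBr mul_mx_scalar => /eqP; rewrite subr_eq => /eqP ->.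
by rewrite addrC.
Qed.

End Res.

Lemma poly_zero (F : numFieldType) (p : {poly F}) : (forall z, p.[z] = 0) -> p = 0.
Proof.
move=> h; apply/eqP; apply: contraT => pn0.
pose rs := [seq (i%:R : F) | i <- iota 0 (size p)].
have H1 : all (root p) rs by apply/allP => x /mapP [i _ ->]; rewrite /root h.
have H2 : uniq rs.
  rewrite map_inj_uniq ?iota_uniq // => i j /eqP; rewrite eqr_nat => /eqP.
  done.
have := max_poly_roots pn0 H1 H2.
by rewrite size_map size_iota ltnn.
Qed.

Lemma L1 (F : numFieldType) (chi chi' N N' : {poly F}) (k k' : nat) (c c' : F) :
 chi \is monic -> size chi = k.+1 -> chi' \is monic -> size chi' = k'.+1 ->
 (size N <= k)%N -> (size N' <= k')%N ->
 (forall z, chi.[z] != 0 -> chi'.[z] != 0 ->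
    c + N.[z] / chi.[z] = c' + N'.[z] / chi'.[z]) -> c = c'.
Proof.
move=> mc sc mc' sc' sN sN' h.
pose P := (c - c')%:P * (chi * chi') + N * chi' - N' * chi.
have chn : chi * chi' != 0 by rewrite mulf_neq0 // monic_neq0.
have P0 : P * (chi * chi') = 0.
  apply: poly_zero => z; rewrite hornerM.
  have [z0|nz] := eqVneq chi.[z] 0; first by rewrite hornerM z0 mul0r mulr0.
  have [z0'|nz'] := eqVneq chi'.[z] 0; first by rewrite hornerM z0' mulr0 mulr0.
  rewrite /P !(hornerD, hornerN, hornerM, hornerC).
  have e2 : c - c' = N'.[z] / chi'.[z] - N.[z] / chi.[z].
    apply: (addIr (N.[z] / chi.[z])); rewrite addrAC (h z nz nz').
    by rewrite addrAC subrr add0r subrK.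
  rewrite e2; field.
  by apply/andP.
have PP : P = 0.
  by move/eqP: P0; rewrite mulf_eq0 (negbTE chn) orbF => /eqP.
have := congr1 (fun p : {poly F} => p`_(k + k')) PP.
rewrite /P coef0 coefB coefD coefCM.
have s1 : size (chi * chi') = (k + k').+1.
  by rewrite size_mul ?monic_neq0 // sc sc' addSn addnS.
have -> : (chi * chi')`_(k + k') = 1.
  have := lead_coef_monicM chi' mc; rewrite (monicP mc') /lead_coef s1 /=.
  done.
rewrite [(N * chi')`_ _]nth_default; last first.
  by apply: leq_trans (size_polyMleq _ _) _; rewrite sc'; lia.
rewrite [(N' * chi)`_ _]nth_default; last first.
  by apply: leq_trans (size_polyMleq _ _) _; rewrite sc; lia.
by rewrite mulr1 addr0 subr0 => /eqP; rewrite subr_eq0 => /eqP.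
Qed.

Lemma zid (F : fieldType) p q kk (AA : 'M[F]_kk) (CC : 'M[F]_(p, kk)) (RR : 'M[F]_(kk, q)) z :
  (z%:M - AA) \in unitmx ->
  z *: (CC *m invmx (z%:M - AA) *m RR) = CC *m RR + CC *m invmx (z%:M - AA) *m (AA *m RR).
Proof.
by move=> u; rewrite scalemxAl scalemxAr zres // mulmxDr mulmx1 mulmxDl !mulmxA.
Qed.

Lemma markov (F : numFieldType) k k' p q (A : 'M[F]_k) (B : 'M[F]_(k,q))
  (C : 'M[F]_(p,k)) (D : 'M[F]_(p,q)) (A' : 'M[F]_k') (B' : 'M[F]_(k',q))
  (C' : 'M[F]_(p,k')) (D' : 'M[F]_(p,q)) :
 (forall z, (z%:M - A) \in unitmx -> (z%:M - A') \in unitmx ->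
    C *m invmx (z%:M - A) *m B + D = C' *m invmx (z%:M - A') *m B' + D') ->
 D = D' /\ forall i, C *m A ^+ i *m B = C' *m A' ^+ i *m B'.
Proof.
move=> h.
have good z : (char_poly A).[z] != 0 -> (char_poly A').[z] != 0 ->
    C *m invmx (z%:M - A) *m B + D = C' *m invmx (z%:M - A') *m B' + D'.
  by move=> n1 n2; apply: h; [case: (inv_res n1) | case: (inv_res n2)].
have step : forall (E E' : 'M[F]_(p,q)) (Rm : 'M_(k,q)) (Rm' : 'M_(k',q)),
  (forall z, (char_poly A).[z] != 0 -> (char_poly A').[z] != 0 ->
     E + C *m invmx (z%:M - A) *m Rm = E' + C' *m invmx (z%:M - A') *m Rm') -> E = E'.
  move=> E E' Rm Rm' hz; apply/matrixP => r c.
  apply: (L1 (char_poly_monic A) (size_char_poly A) (char_poly_monic A')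
     (size_char_poly A') (size_Npoly A C Rm r c) (size_Npoly A' C' Rm' r c)).
  move=> z n1 n2; rewrite -(ratE _ _ _ _ n1) -(ratE _ _ _ _ n2).
  by have := congr1 (fun M : 'M_(p,q) => M r c) (hz z n1 n2); rewrite !mxE.
have DD : D = D'.
  by apply: (step D D' B B') => z m1 m2; rewrite addrC good // addrC.
have phi : forall i z, (char_poly A).[z] != 0 -> (char_poly A').[z] != 0 ->
   C *m invmx (z%:M - A) *m (A ^+ i *m B) = C' *m invmx (z%:M - A') *m (A' ^+ i *m B').
  elim=> [|i IH] z n1 n2.
    rewrite !expr0 !mul1mx; apply: (addIr D); rewrite {2}DD; exact: good.
  have [u1 _] := inv_res n1; have [u2 _] := inv_res n2.
  have hh : C *m (A ^+ i *m B) = C' *m (A' ^+ i *m B').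
    apply: (step _ _ (A *m (A ^+ i *m B)) (A' *m (A' ^+ i *m B'))) => z' m1 m2.
    have [v1 _] := inv_res m1; have [v2 _] := inv_res m2.
    by rewrite -!zid // IH.
  have eA : A *m (A ^+ i *m B) = A ^+ i.+1 *m B by rewrite mulmxA exprS.
  have eA' : A' *m (A' ^+ i *m B') = A' ^+ i.+1 *m B' by rewrite mulmxA exprS.
  rewrite -eA -eA'; apply: (addrI (C *m (A ^+ i *m B))); rewrite {2}hh -!zid //.
  by rewrite IH.
split=> // i.
rewrite -!mulmxA.
apply: (step _ _ (A *m (A ^+ i *m B)) (A' *m (A' ^+ i *m B'))) => z m1 m2.
have [v1 _] := inv_res m1; have [v2 _] := inv_res m2.
by rewrite -!zid // phi.
Qed.

Section Gen.
Variable R : realType.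

Lemma enorm0 n : enorm (0 : 'cV[R]_n) = 0.
Proof. by rewrite /enorm big1 ?sqrtr0 // => i _; rewrite mxE expr2 mulr0. Qed.

Lemma zii0 n (P : set 'cV[R]_n) : zero_in_interior P -> P 0.
Proof. by case=> r r0 h; apply: h; rewrite /cball0 /= enorm0 ltW. Qed.

Lemma coord_le n (x : 'cV[R]_n) i : `|x i 0| <= enorm x.
Proof.
rewrite /enorm -sqrtr_sqr ler_wsqrtr // (bigD1 i) //= lerDl.
by apply: sumr_ge0 => j _; rewrite sqr_ge0.
Qed.

Lemma enorm_le n (x : 'cV[R]_n) t : 0 <= t -> (forall i, `|x i 0| <= t) ->
  enorm x <= n%:R * t.
Proof.
move=> t0 h; rewrite /enorm.
have nt0 : 0 <= n%:R * t by rewrite mulr_ge0.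
rewrite -(ger0_norm nt0) -sqrtr_sqr ler_wsqrtr //.
apply: (@le_trans _ _ (\sum_(i < n) t ^+ 2)).
  apply: ler_sum => i _; have := h i; rewrite ler_norml => /andP[h1 h2]; nra.
rewrite sumr_const card_ord -mulr_natl exprMn.
have n1 : n%:R <= n%:R ^+ 2 :> R.
  case: (n) => [|k]; first by rewrite expr2 mulr0.
  have : 1 <= k.+1%:R :> R by rewrite ler1n.
  nra.
have := sqr_ge0 t; nra.
Qed.

Lemma enorm_delta n (c : R) (l : 'I_n) : enorm (c *: delta_mx l (0 : 'I_1)) = `|c|.
Proof.
rewrite /enorm (bigD1 l) //= big1 ?addr0.
  by rewrite !mxE !eqxx mulr1 sqrtr_sqr.
by move=> i /negbTE il; rewrite !mxE il /= mulr0 expr2 mulr0.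
Qed.

Lemma polyhedron_conv n (P : set 'cV[R]_n) x y t : polyhedron P -> P x -> P y ->
  0 <= t <= 1 -> P (t *: x + (1 - t) *: y).
Proof.
case=> k [H [h ->]] /= hx hy /andP[t0 t1] i.
rewrite mulmxDr -!scalemxAr.
move: (H *m x) (H *m y) hx hy => a b ha hb; rewrite !mxE.
have := ha i; have := hb i; nra.
Qed.

Lemma polyhedron_scale n (P : set 'cV[R]_n) x t : polyhedron P -> P 0 -> P x ->
  0 <= t <= 1 -> P (t *: x).
Proof.
move=> hP h0 hx ht; have := polyhedron_conv hP hx h0 ht.
by rewrite scaler0 addr0.
Qed.

Lemma pdiff_conv n (P Y : set 'cV[R]_n) a b t : polyhedron P -> pdiff P Y a -> pdiff P Y b ->
  0 <= t <= 1 -> pdiff P Y (t *: a + (1 - t) *: b).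
Proof.
move=> hP ha hb ht y Yy.
have -> : t *: a + (1 - t) *: b + y = t *: (a + y) + (1 - t) *: (b + y).
  by apply/matrixP => i j; rewrite !mxE; ring.
by apply: polyhedron_conv => //; [apply: ha | apply: hb].
Qed.

End Gen.

Lemma map_mxXn (R : realType) k (M : 'M[R]_k) i :
  map_mx (real_complex R) (M ^+ i) = (map_mx (real_complex R) M) ^+ i.
Proof.
elim: i => [|i IH]; first by rewrite !expr0 map_mx1.
by rewrite !exprS -!mulmxE map_mxM IH.
Qed.

Lemma markovR (R : realType) k k' p q (A : 'M[R]_k) (B : 'M[R]_(k,q))
  (C : 'M[R]_(p,k)) (D : 'M[R]_(p,q)) (A' : 'M[R]_k') (B' : 'M[R]_(k',q))
  (C' : 'M[R]_(p,k')) (D' : 'M[R]_(p,q)) :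
  same_tf A B C D A' B' C' D' ->
  D = D' /\ forall i, C *m A ^+ i *m B = C' *m A' ^+ i *m B'.
Proof.
move=> h.
have [e1 e2] := markov (h).
split.
  by apply: (@map_mx_inj _ _ (real_complex R)).
move=> i; apply: (@map_mx_inj _ _ (real_complex R)).
by rewrite !map_mxM !map_mxXn e2.
Qed.

Section Main.
Variables (R : realType) (n m nK nK' : nat)
  (A : 'M[R]_n) (B : 'M[R]_(n, m))
  (D W V S X : set 'cV[R]_n) (U : set 'cV[R]_m)
  (AK : 'M[R]_nK) (BK : 'M[R]_(nK, n)) (CK : 'M[R]_(m, nK)) (DK : 'M[R]_(m, n))
  (AK' : 'M[R]_nK') (BK' : 'M[R]_(nK', n)) (CK' : 'M[R]_(m, nK')) (DK' : 'M[R]_(m, n))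
  (OmegaI : set 'cV[R]_n) (OmegaO : set 'cV[R]_(n + nK)) (eps_s : R).

Local Notation ACL := (A_CL A B AK BK CK DK).
Local Notation BCL := (B_CL B BK DK).
Local Notation CCL := (C_CL CK DK).
Local Notation DCL := (D_CL DK).
Local Notation proj := (proj_x R n nK).
Local Notation P := (pdiff OmegaI (Nset V)).
Local Notation Fm := (fun i => proj *m ACL ^+ i *m BCL).
Local Notation Mj := (fun j => proj *m ACL ^+ j *m col_mx (1%:M : 'M[R]_n) (0 : 'M[R]_(nK, n))).

Definition matchK (xh : 'cV[R]_nK') (xKn : 'cV[R]_nK) :=
  forall p, CK' *m AK' ^+ p *m xh = CK *m AK ^+ p *m xKn.

Lemma cl_alg (x : 'cV[R]_n) xKu ww vv :
  ACL *m col_mx x xKu + BCL *m col_mx ww vv =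
    col_mx (A *m x + B *m (CK *m xKu + DK *m (x + vv)) + ww) (AK *m xKu + BK *m (x + vv))
  /\ CCL *m col_mx x xKu + DCL *m col_mx ww vv = CK *m xKu + DK *m (x + vv).
Proof.
rewrite /A_CL /B_CL /C_CL /D_CL !mul_block_col !mul_row_col add_col_mx.
split.
  congr col_mx.
    rewrite !mulmxDl !mulmxDr !mul1mx !mulmxA.
    by apply/matrixP => i j; rewrite !mxE; ring.
  rewrite mul0mx add0r mulmxDr.
  by apply/matrixP => i j; rewrite !mxE; ring.
rewrite mul0mx add0r mulmxDr.
by apply/matrixP => i j; rewrite !mxE; ring.
Qed.

Hypothesis Mk : forall i, CK' *m AK' ^+ i *m BK' = CK *m AK ^+ i *m BK.

Lemma match_step xu xKu (y : 'cV[R]_n) : matchK xu xKu ->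
  matchK (AK' *m xu + BK' *m y) (AK *m xKu + BK *m y).
Proof.
move=> h p; rewrite !mulmxDr !mulmxA Mk -!mulmxA.
have e1 : AK' ^+ p *m (AK' *m xu) = AK' ^+ p.+1 *m xu by rewrite mulmxA exprSr.
have e2 : AK ^+ p *m (AK *m xKu) = AK ^+ p.+1 *m xKu by rewrite mulmxA exprSr.
by rewrite e1 e2 !mulmxA h.
Qed.

Lemma msum_iter_mem (F : nat -> 'M[R]_(n, n + n)) N (g : nat -> 'cV[R]_(n + n)) :
  (forall i, Zset W V (g i)) ->
  msum_iter (fun i => mimage (F i) (Zset W V)) N (\sum_(i < N.+1) F i *m g i).
Proof.
move=> hg; elim: N => [|N IH] /=.
  by rewrite big_ord1; exists (g 0%N).
rewrite big_ord_recr /=.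
exists (\sum_(i < N.+1) F i *m g i), (F N.+1 *m g N.+1); split => //.
by exists (g N.+1).
Qed.


Hypothesis HS : exists c, 0 <= c /\ forall x, S x -> forall i, `|x i 0| <= c.
Hypothesis HW : exists c, 0 <= c /\ forall x, W x -> forall i, `|x i 0| <= c.
Hypothesis HD : exists c, 0 <= c /\ forall x, D x -> forall i, `|x i 0| <= c.

Lemma conv_bound (Y : set 'cV[R]_n) c z : (forall x, Y x -> forall i, `|x i 0| <= c) ->
  conv Y z -> forall i, `|z i 0| <= c.
Proof.
move=> hY [k [a [p [a0 a1 pY ->]]]] i.
rewrite summxE; apply: le_trans (ler_norm_sum _ _ _) _.
apply: (@le_trans _ _ (\sum_(j < k) a j * c)).
  apply: ler_sum => j _; rewrite mxE normrM (ger0_norm (a0 j)).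
  by apply: ler_wpM2l => //; apply: hY.
by rewrite -mulr_suml a1 mul1r.
Qed.

Lemma Sc_bound : exists c, 0 <= c /\ forall x, Sconv A S W D x -> forall i, `|x i 0| <= c.
Proof.
have [cS [cS0 hS]] := HS; have [cW [cW0 hW]] := HW; have [cD [cD0 hD]] := HD.
pose cA := \sum_i \sum_j `|A i j|.
have cA0 : 0 <= cA by apply: sumr_ge0 => i _; apply: sumr_ge0 => j _.
have hA : forall s, S s -> forall i, `|(A *m s) i 0| <= cA * cS.
  move=> s Ss i; rewrite mxE; apply: le_trans (ler_norm_sum _ _ _) _.
  apply: (@le_trans _ _ (\sum_j `|A i j| * cS)).
    by apply: ler_sum => j _; rewrite normrM ler_wpM2l // hS.
  rewrite -mulr_suml; apply: ler_wpM2r => //; rewrite /cA [X in _ <= X](bigD1 i) //= lerDl.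
  by apply: sumr_ge0 => i' _; apply: sumr_ge0.
exists (cS + (cA * cS + cW + cD)); split.
  by rewrite !addr_ge0 // mulr_ge0.
move=> z hz; apply: (conv_bound _ hz) => x [Sx|Spx] i.
  apply: le_trans (hS _ Sx i) _; rewrite lerDl.
  by rewrite !addr_ge0 // mulr_ge0.
move: Spx => [x1 [d1 [[x2 [w1 [[s Ss <-] Ww ->]]] Dd ->]]].
rewrite !mxE; apply: le_trans (ler_normD _ _) _.
rewrite -[X in X <= _]add0r; apply: lerD => //.
apply: lerD; last exact: hD.
apply: le_trans (ler_normD _ _) _; apply: lerD; last exact: hW.
by have := hA s Ss i; rewrite mxE.
Qed.


Hypothesis Wball : exists2 r : R, 0 < r & cball0 r `<=` W.
Hypothesis V0 : V 0.
Hypothesis Heps : 0 < eps_s < 1.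
Hypothesis I1 : OmegaI `<=` sscale eps_s S.
Hypothesis I3 : exists beta : R, 0 < beta < 1 /\ forall N : nat,
  msum_iter (fun i => mimage (Fm i) (Zset W V)) N `<=` sscale beta P.

Lemma N0 : Nset V 0.
Proof. by exists 0, 0; split => //; [exists 0; rewrite ?oppr0 | rewrite addr0]. Qed.

Lemma P_sub x : P x -> OmegaI x.
Proof. by move=> h; have := h 0 N0; rewrite addr0. Qed.

Lemma eB (w0 : 'cV[R]_n) : BCL *m col_mx w0 0 = col_mx 1%:M 0 *m w0.
Proof. by rewrite /B_CL mul_block_col mul_col_mx mul1mx !mulmx0 mul0mx addr0 add0r. Qed.

Lemma sum_bound : exists K, 0 <= K /\ forall N p l, \sum_(i < N.+1) `|Mj i p l| <= K.
Proof.
have [cS [cS0 hS]] := HS; have [r r0 hr] := Wball; have [beta [hb hI3]] := I3.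
exists (cS / r); split; first by rewrite divr_ge0 // ltW.
move=> N p l.
pose sg i : R := if 0 <= Mj i p l then 1 else -1.
pose g i := col_mx ((r * sg i) *: delta_mx l (0 : 'I_1)) (0 : 'cV[R]_n).
have hg i : Zset W V (g i).
  exists ((r * sg i) *: delta_mx l 0).
    apply: hr; rewrite /cball0 /= enorm_delta normrM (gtr0_norm r0) /sg.
    by case: ifP => _; rewrite ?normrN normr1 mulr1.
  by exists 0.
have [y Py eq] := hI3 N _ (msum_iter_mem Fm N hg).
have hcoord : (\sum_(i < N.+1) Fm i *m g i) p 0 = r * \sum_(i < N.+1) `|Mj i p l|.
  rewrite summxE mulr_sumr; apply: eq_bigr => i _.
  rewrite -mulmxA eB !mulmxA -scalemxAr mxE -colE mxE /sg -mulrA.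
  case: ifP => h0; first by rewrite mul1r ger0_norm.
  by rewrite mulN1r ltr0_norm // ltNge h0.
have [s Ss ys] := I1 (P_sub Py).
have : r * \sum_(i < N.+1) `|Mj i p l| <= cS.
  rewrite -hcoord -eq -ys !mxE.
  have := hS s Ss p; move: Heps hb => /andP[e0 e1] /andP[b0 b1].
  move=> hsp.
  have h1 : beta * (eps_s * s p 0) <= beta * (eps_s * `|s p 0|).
    apply: ler_wpM2l; first exact: ltW.
    apply: ler_wpM2l; first exact: ltW.
    exact: ler_norm.
  have h2 : eps_s * `|s p 0| <= `|s p 0|.
    by have := normr_ge0 (s p 0); nra.
  have h3 : beta * (eps_s * `|s p 0|) <= eps_s * `|s p 0|.
    have : 0 <= eps_s * `|s p 0| by apply: mulr_ge0; [exact: ltW|].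
    nra.
  lra.
by rewrite ler_pdivlMr // mulrC.
Qed.


Hypothesis I2 : exists2 alpha : R, 0 < alpha & cball0 alpha `<=` P.
Hypothesis polyOI : polyhedron OmegaI.

Lemma exists_T : exists T, (0 < T)%N /\ forall x, Sconv A S W D x ->
  exists j, (1 <= j <= T)%N /\ forall s,
    msum_iter (fun i => mimage (Fm i) (Zset W V)) j.-1 s -> P (Mj j *m x + s).
Proof.
have [cc [cc0 hcc]] := Sc_bound; have [K [K0 hK]] := sum_bound.
have [alpha a0 hI2] := I2; have [beta [/andP[b0 b1] hI3]] := I3.
pose a := n%:R ^+ 2 * cc.
have a0' : 0 <= a by apply: mulr_ge0 => //; exact: sqr_ge0.
pose eps := (1 - beta) * alpha / (a + 1).
have eps0 : 0 < eps by rewrite /eps divr_gt0 ?mulr_gt0 ?subr_gt0 //; lra.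
pose T := Num.Def.archi_bound (n%:R ^+ 2 * K / eps).
have hT : n%:R ^+ 2 * K < T%:R * eps.
  rewrite -ltr_pdivrMr //; apply: archi_boundP.
  by apply: divr_ge0; [apply: mulr_ge0 => //; exact: sqr_ge0 | exact: ltW].
have T0 : (0 < T)%N.
  case: T hT => [|T'] //; rewrite mul0r => h.
  have : 0 <= n%:R ^+ 2 * K by apply: mulr_ge0 => //; exact: sqr_ge0.
  lra.
exists T; split => // x Sx.
have [j [hj hsmall]] : exists j, (1 <= j <= T)%N /\ forall p l, `|Mj j p l| < eps.
  case: (pselect (exists j, (1 <= j <= T)%N /\ forall p l, `|Mj j p l| < eps)) => // hne.
  exfalso.
  have hge : forall j : 'I_T, eps <= \sum_p \sum_l `|Mj j.+1 p l|.
    move=> j.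
    have [/forallP hall|] := boolP [forall p : 'I_n, [forall l : 'I_n, `|Mj j.+1 p l| < eps]].
      exfalso; apply: hne; exists j.+1; split; first by rewrite ltn_ord.
      by move=> p l; have /forallP := hall p; apply.
    move/forallPn => [p /forallPn [l]]; rewrite -leNgt => hle.
    apply: le_trans hle _; rewrite (bigD1 p) //= (bigD1 l) //= -addrA lerDl.
    by rewrite addr_ge0 //; apply: sumr_ge0 => *; [|apply: sumr_ge0 => *].

  have : T%:R * eps <= n%:R ^+ 2 * K.
    apply: (@le_trans _ _ (\sum_(j < T) \sum_p \sum_l `|Mj j.+1 p l|)).
      apply: le_trans (ler_sum _ (fun j _ => hge j)).
      by rewrite sumr_const card_ord mulr_natl.
    rewrite exchange_big /=; apply: (@le_trans _ _ (\sum_(p < n) \sum_(l < n) K)).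
      apply: ler_sum => p _; rewrite exchange_big /=; apply: ler_sum => l _.
      apply: le_trans _ (hK T p l); rewrite [X in _ <= X]big_ord_recl /=.
      rewrite -[X in X <= _]add0r; apply: lerD => //.
    by rewrite !sumr_const !card_ord -mulrnA -[X in X <= _]mulr_natl natrM expr2.
  lra.
exists j; split => // s hs.
have [r0 Pr0 sr] := hI3 _ _ hs.
pose e := Mj j *m x.
have he : forall p, `|e p 0| <= n%:R * eps * cc.
  move=> p; rewrite /e mxE; apply: le_trans (ler_norm_sum _ _ _) _.
  apply: (@le_trans _ _ (\sum_(l < n) eps * cc)).
    apply: ler_sum => l _; rewrite normrM; apply: ler_pM => //.
      exact: ltW (hsmall p l).
    exact: hcc.
  by rewrite sumr_const card_ord -[X in X <= _]mulr_natl mulrA.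
have b1' : 1 - beta != 0 by rewrite subr_eq0; apply/eqP; lra.
pose e' := (1 - beta)^-1 *: e.
have Pe' : P e'.
  apply: hI2; rewrite /cball0 /=.
  have t0 : 0 <= (1 - beta)^-1 * (n%:R * eps * cc).
    apply: mulr_ge0; first by rewrite invr_ge0; lra.
    by apply: mulr_ge0 => //; apply: mulr_ge0 => //; exact: ltW.
  apply: le_trans (enorm_le t0 _) _.
    move=> p; rewrite mxE normrM ger0_norm; last by rewrite invr_ge0; lra.
    by apply: ler_wpM2l; [rewrite invr_ge0; lra | exact: he].
  have -> : n%:R * ((1 - beta)^-1 * (n%:R * eps * cc)) = alpha * (a / (a + 1)).
    have a1 : n%:R ^+ 2 * cc + 1 != 0 :> R.
      by apply: lt0r_neq0; have := a0'; rewrite /a; lra.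
    rewrite /eps /a; field.
    by rewrite a1 b1'.
  apply: ler_piMr; first exact: ltW.
  have a2 : 0 < a + 1 by lra.
  by rewrite ler_pdivrMr // mul1r; lra.
have -> : Mj j *m x + s = beta *: r0 + (1 - beta) *: e'.
  by rewrite /e' scalerA mulfV // scale1r addrC sr.
by apply: pdiff_conv => //; apply/andP; split; lra.
Qed.



Hypothesis SX : S `<=` X.
Hypothesis U0 : U 0.
Hypothesis DKe : DK' = DK.
Hypothesis polyS : polyhedron S.
Hypothesis S0 : S 0.
Hypothesis O1 : sprod (Sconv A S W D) [set (0 : 'cV[R]_nK)] `<=` OmegaO.
Hypothesis O2 : msum (mimage ACL OmegaO) (mimage BCL (Zset W V)) `<=` OmegaO.
Hypothesis O3 : mimage proj OmegaO `<=` X.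
Hypothesis O4 : msum (mimage CCL OmegaO) (mimage DCL (Zset W V)) `<=` U.

Lemma projE (x : 'cV[R]_n) (xK : 'cV[R]_nK) : proj *m col_mx x xK = x.
Proof. by rewrite /proj_x mul_row_col mul1mx mul0mx addr0. Qed.

Lemma Splus_Sconv x : Splus A S W D x -> Sconv A S W D x.
Proof.
move=> h; exists 1%N, (fun _ => 1), (fun _ => x); split.
- by move=> _; exact: ler01.
- by rewrite big_ord1.
- by move=> _; right.
- by rewrite big_ord1 scale1r.
Qed.

Section Traj.
Variables (d w v : nat -> 'cV[R]_n) (k0 : nat) (x0 : 'cV[R]_n).
Hypothesis hd : forall k, D (d k).
Hypothesis hw : forall k, W (w k).
Hypothesis hv : forall k, V (v k).
Hypothesis hx0 : Sconv A S W D x0.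

Local Notation run := (a1_run A B AK' BK' CK' DK' S V OmegaI d w v k0 x0).
Local Notation stp := (a1_step A B AK' BK' CK' DK' S V OmegaI d w v).
Local Notation sigma := (a1_sigma S V OmegaI).
Local Notation input := (a1_input CK' DK' S V OmegaI).

Definition inv (st : 'cV[R]_n * 'cV[R]_nK' * bool) : Prop :=
  let: (x, xh, sp) := st in
  if sp then exists xKn, matchK xh xKn /\ OmegaO (col_mx x xKn) else Sconv A S W D x.

Lemma step_true k x xh sp xKu : matchK (a1_xh_used sp xh) xKu -> sigma sp (x + v k) = true ->
  [/\ (stp k (x, xh, sp)).2 = true,
      input sp xh (x + v k) = CCL *m col_mx x xKu + DCL *m col_mx (w k) (v k),
      matchK (stp k (x, xh, sp)).1.2 (AK *m xKu + BK *m (x + v k)) &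
      col_mx (stp k (x, xh, sp)).1.1 (AK *m xKu + BK *m (x + v k)) =
        ACL *m col_mx x xKu + BCL *m col_mx (w k) (v k)].
Proof.
move=> hm hs; have [c1 c2] := cl_alg x xKu (w k) (v k).
have hu : input sp xh (x + v k) = CK *m xKu + DK *m (x + v k).
  by rewrite /a1_input hs; have := hm 0%N; rewrite !expr0 !mulmx1 => ->; rewrite DKe.
split.
- by rewrite /a1_step hs.
- by rewrite hu c2.
- by rewrite /a1_step hs /=; apply: match_step.
rewrite c1 /a1_step hs /=; congr col_mx.
rewrite -/(input sp xh (x + v k)) hu.
by rewrite scale1r subrr scale0r addr0.
Qed.

Lemma sig_false_S sp x k : sigma sp (x + v k) = false -> S x.
Proof.
rewrite /a1_sigma; case: ifP => // /set_mem hin _.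
have := hin (- v k); rewrite addrK; apply.
by exists (v k).
Qed.

Lemma inv_step k st : inv st -> let: (x, xh, sp) := st in
  [/\ X x, U (input sp xh (x + v k)), (~~ sigma sp (x + v k) -> S x) & inv (stp k st)].
Proof.
case: st => [[x xh] sp] hinv.
case E: (sigma sp (x + v k)).
  have [xKu [hm hO]] : exists xKu, matchK (a1_xh_used sp xh) xKu /\ OmegaO (col_mx x xKu).
    case: sp hinv E => /= hinv E; first exact: hinv.
    exists 0; split; first by move=> p; rewrite !mulmx0.
    by apply: O1; exists x => //; exists 0.
  have [e1 e2 e3 e4] := step_true hm E.
  split => //.
  - by apply: O3; exists (col_mx x xKu) => //; rewrite projE.
  - rewrite e2; apply: O4; exists (CCL *m col_mx x xKu), (DCL *m col_mx (w k) (v k)).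
    split => //; first by exists (col_mx x xKu).
    by exists (col_mx (w k) (v k)) => //; exists (w k) => //; exists (v k).
  - rewrite /inv; case: (stp k (x, xh, sp)) e1 e3 e4 => [[x' xh'] sp'] /= -> e3 e4.
    exists (AK *m xKu + BK *m (x + v k)); split => //.
    rewrite e4; apply: O2.
    exists (ACL *m col_mx x xKu), (BCL *m col_mx (w k) (v k)); split => //.
      by exists (col_mx x xKu).
    by exists (col_mx (w k) (v k)) => //; exists (w k) => //; exists (v k).
have Sx := sig_false_S E.
split.
- exact: SX.
- by rewrite /a1_input E.
- by [].
rewrite /inv /a1_step E /=; apply: Splus_Sconv.
exists (A *m x + w k), (d k); split => //.
  by exists (A *m x), (w k); split => //; exists x.
by rewrite scale0r addr0 subr0 scale1r addrAC.
Qed.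

Lemma inv_run j : inv (run j).
Proof.
elim: j => [|j IH] /=; first exact: hx0.
by have := inv_step (k0 + j) IH; case: (run j) => [[x xh] sp] [].
Qed.

Definition sg j := sigma (run j).2 ((run j).1.1 + v (k0 + j)).

Lemma run_prev j : (run j.+1).2 = sg j.
Proof. by rewrite /sg /=; case: (run j) => [[x xh] sp]. Qed.



Local Notation zz := (fun k => col_mx (w k) (v k)).

Lemma track j0 t : (run j0).2 = false -> (forall i, (i < t)%N -> sg (j0 + i) = true) ->
  exists xKn, matchK (a1_xh_used (run (j0 + t)).2 (run (j0 + t)).1.2) xKn /\
  col_mx (run (j0 + t)).1.1 xKn = ACL ^+ t *m col_mx (run j0).1.1 0 +
     \sum_(i < t) ACL ^+ i *m BCL *m zz (k0 + j0 + (t.-1 - i))%N.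
Proof.
move=> h0; elim: t => [|t IH] ht.
  exists 0; rewrite addn0 h0 /=; split; first by move=> p; rewrite !mulmx0.
  by rewrite expr0 mul1mx big_ord0 addr0.
have [xKn [hm he]] := IH (fun i hi => ht i (ltnW hi)).
have hs := ht t (ltnSn t); rewrite /sg in hs.
rewrite addnS.
move: hm he hs; rewrite [run (j0 + t).+1]/=.
case: (run (j0 + t)) => [[x xh] sp] hm he hs.
simpl in hm, he, hs.
have eS : forall i, ACL *m ACL ^+ i = ACL ^+ i.+1 by move=> i; rewrite exprS.
have [e1 e2 e3 e4] := step_true hm hs.
exists (AK *m xKn + BK *m (x + v (k0 + (j0 + t)))); rewrite e1; split => //.
rewrite e4 he big_ord_recl /= expr0 mul1mx subn0 addnA mulmxDr mulmxA eS.
rewrite mulmx_sumr -addrA; congr (_ + _); rewrite addrC; congr (_ + _).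
apply: eq_bigr => i _; rewrite !mulmxA eS.
have -> : bump 0 i = i.+1 by rewrite /bump /= add1n.
by have -> : (t - i.+1 = t.-1 - i)%N by lia.
Qed.


Lemma b_part T : (forall x, Sconv A S W D x -> exists j, (1 <= j <= T)%N /\ forall s,
    msum_iter (fun i => mimage (Fm i) (Zset W V)) j.-1 s -> P (Mj j *m x + s)) ->
  forall j0, (run j0).2 = false -> sg j0 = true ->
  exists t, (1 <= t <= T)%N /\ sg (j0 + t) = false.
Proof.
move=> hT j0 h0 hs0.
have Sx : Sconv A S W D (run j0).1.1.
  have := inv_run j0; move: h0.
  by case: (run j0) => [[x xh] sp] /= ->.
have [j [hj hP]] := hT _ Sx.
case: (pselect (exists i, (1 <= i < j)%N /\ sg (j0 + i) = false)) => [[i [hi hsi]]|hne].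
  by exists i; split => //; lia.
have hall : forall i, (i < j)%N -> sg (j0 + i) = true.
  move=> [|i] hi; first by rewrite addn0.
  case E: (sg (j0 + i.+1)) => //; exfalso; apply: hne; exists i.+1; split => //; lia.
have [xKn [_ he]] := track h0 hall.
exists j; split => //.
pose g i := col_mx (w (k0 + j0 + (j.-1 - i))%N) (v (k0 + j0 + (j.-1 - i))%N).
have hg : forall i, Zset W V (g i).
  by move=> i; exists (w (k0 + j0 + (j.-1 - i))%N) => //; exists (v (k0 + j0 + (j.-1 - i))%N).
have hms := msum_iter_mem Fm j.-1 hg.
rewrite prednK in hms; last by lia.
have hPx := hP _ hms.
set x' := (run (j0 + j)).1.1.
have ex : x' = Mj j *m (run j0).1.1 + \sum_(i < j) Fm i *m g i.
  rewrite -(projE x' xKn) he.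
  rewrite mulmxDr mulmx_sumr; congr (_ + _).
    have -> : col_mx (run j0).1.1 0 = col_mx (1%:M : 'M[R]_n) (0 : 'M[R]_(nK, n)) *m (run j0).1.1.
      by rewrite mul_col_mx mul1mx mul0mx.
    by rewrite !mulmxA.
  by apply: eq_bigr => i _; rewrite !mulmxA.
rewrite -ex in hPx.
have hO : forall v2, setneg V v2 -> OmegaI (x' + v (k0 + (j0 + j)) + v2).
  move=> v2 hv2.
  have -> : x' + v (k0 + (j0 + j)) + v2 = x' + (v2 + v (k0 + (j0 + j))).
    by rewrite -addrA (addrC (v _)).
  by apply: hPx; exists v2, (v (k0 + (j0 + j))).
have hS' : forall v2, setneg V v2 -> S (x' + v (k0 + (j0 + j)) + v2).
  move=> v2 hv2; have [s1 Ss1 <-] := I1 (hO v2 hv2).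
  by apply: polyhedron_scale => //; move: Heps => /andP[e0 e1]; apply/andP; split; lra.
rewrite /sg /a1_sigma -/x'.
rewrite (@mem_set _ (SmV S V) _ hS') (@mem_set _ (OmV V OmegaI) _ hO) /=.
by rewrite andbF.
Qed.

End Traj.

Lemma final : exists Tmax : nat, (0 < Tmax)%N /\
  forall (k0 : nat) (x0 : 'cV[R]_n) (d w v : nat -> 'cV[R]_n),
    (forall k, D (d k)) -> (forall k, W (w k)) -> (forall k, V (v k)) ->
    Sconv A S W D x0 ->
    let x := a1_x A B AK' BK' CK' DK' S V OmegaI d w v k0 x0 in
    let u := a1_u A B AK' BK' CK' DK' S V OmegaI d w v k0 x0 in
    let sigma := a1_sig A B AK' BK' CK' DK' S V OmegaI d w v k0 x0 in
    [/\ forall k, (k0 <= k)%N -> X (x k) /\ U (u k),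
        (sigma k0 -> exists T0, (1 <= T0 <= Tmax)%N /\ ~~ sigma (k0 + T0)%N) /\
        (forall k, (k0 < k)%N -> sigma k -> ~~ sigma k.-1 ->
           exists T, (1 <= T <= Tmax)%N /\ ~~ sigma (k + T)%N)
      & forall k, (k0 <= k)%N -> ~~ sigma k -> S (x k)].
Proof.
have [T [T0 hT]] := exists_T.
exists T; split => // k0 x0 d w v hd hw hv hx0 x u sigma.
have sigE : forall k, (k0 <= k)%N -> sigma k = sg d w v k0 x0 (k - k0).
  by move=> k hk; rewrite /sigma /a1_sig /sg /a1_prev /a1_y /a1_x subnKC.
have hstep : forall k, (k0 <= k)%N -> [/\ X (x k), U (u k) & (~~ sigma k -> S (x k))].
  move=> k hk; have := inv_step hd hw hv k (inv_run k0 hd hw hv hx0 (k - k0)).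
  rewrite /x /u /sigma /a1_u /a1_sig /a1_y /a1_x /a1_prev /a1_xh.
  by case: (a1_run _ _ _ _ _ _ _ _ _ d w v k0 x0 (k - k0)) => [[xx xh] sp] [].
split.
- by move=> k hk; have [] := hstep k hk.
- split.
  + move=> hs.
    have hs0 : sg d w v k0 x0 0 = true by rewrite -(subnn k0) -sigE.
    have [t [ht hst]] := b_part hd hw hv hx0 hT (j0 := 0) erefl hs0.
    exists t; split => //; rewrite sigE ?leq_addr // addKn.
    by rewrite add0n in hst; rewrite hst.
  + move=> k hk hs hs'.
    have hk' : (k0 <= k.-1)%N by lia.
    have ek : (k - k0 = (k.-1 - k0).+1)%N by lia.
    have prev : (a1_run A B AK' BK' CK' DK' S V OmegaI d w v k0 x0 (k - k0)).2 = false.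
      by rewrite ek run_prev -sigE //; apply: negbTE.
    have hsk : sg d w v k0 x0 (k - k0) = true by rewrite -sigE // ltnW.
    have [t [ht hst]] := b_part hd hw hv hx0 hT prev hsk.
    exists t; split => //; rewrite sigE; last by lia.
    have -> : (k + t - k0 = k - k0 + t)%N by lia.
    by rewrite hst.
- by move=> k hk; have [] := hstep k hk.
Qed.

End Main.

Unset Implicit Arguments.
Set Strict Implicit.
Set Printing Implicit Defensive.

Theorem corollary1 (R : realType) (n m nK nK' : nat)
  (A : 'M[R]_n) (B : 'M[R]_(n, m))
  (D W V S X : set 'cV[R]_n) (U : set 'cV[R]_m)
  (AK : 'M[R]_nK) (BK : 'M[R]_(nK, n)) (CK : 'M[R]_(m, nK)) (DK : 'M[R]_(m, n))
  (AK' : 'M[R]_nK') (BK' : 'M[R]_(nK', n)) (CK' : 'M[R]_(m, nK')) (DK' : 'M[R]_(m, n))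
  (OmegaI : set 'cV[R]_n) (OmegaO : set 'cV[R]_(n + nK)) (eps_s : R) :
  (* standing assumptions *)
  polytope D -> polytope W -> polytope V -> polytope S -> polytope X -> polytope U ->
  zero_in_interior D -> zero_in_interior W -> zero_in_interior V ->
  zero_in_interior S -> zero_in_interior X -> zero_in_interior U ->
  S `<=` X ->
  (exists eps_p eps_m : R, [/\ 0 < eps_p < 1, 0 < eps_m < 1,
      V `<=` sscale eps_p S & setneg V `<=` sscale eps_m S]) ->
  (exists2 r : R, 0 < r & @cball0 R n r `<=` S) ->
  Splus A S W D `<=` X ->
  (* nominal controller: A_CL Schur *)
  schur (A_CL A B AK BK CK DK) ->
  (* Omega_I, Omega_O polyhedral, containing the origins *)
  polyhedron OmegaI -> OmegaI 0 -> polyhedron OmegaO -> OmegaO 0 ->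
  (* I1 - I3 *)
  0 < eps_s < 1 ->
  OmegaI `<=` sscale eps_s S ->
  (exists2 alpha : R, 0 < alpha & @cball0 R n alpha `<=` pdiff OmegaI (Nset V)) ->
  (exists beta : R, 0 < beta < 1 /\
     forall N : nat,
       msum_iter (fun i => mimage (proj_x R n nK *m (A_CL A B AK BK CK DK) ^+ i
                                     *m B_CL B BK DK) (Zset W V)) N
       `<=` sscale beta (pdiff OmegaI (Nset V))) ->
  (* O1 - O4 *)
  sprod (Sconv A S W D) [set (0 : 'cV[R]_nK)] `<=` OmegaO ->
  msum (mimage (A_CL A B AK BK CK DK) OmegaO) (mimage (B_CL B BK DK) (Zset W V))
    `<=` OmegaO ->
  mimage (proj_x R n nK) OmegaO `<=` X ->
  msum (mimage (C_CL CK DK) OmegaO) (mimage (D_CL DK) (Zset W V)) `<=` U ->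
  (* (AK', BK', CK', DK') is another realization of K(z) *)
  same_tf AK BK CK DK AK' BK' CK' DK' ->
  exists Tmax : nat, (0 < Tmax)%N /\
  forall (k0 : nat) (x0 : 'cV[R]_n) (d w v : nat -> 'cV[R]_n),
    (forall k, D (d k)) -> (forall k, W (w k)) -> (forall k, V (v k)) ->
    Sconv A S W D x0 ->
    let x := a1_x A B AK' BK' CK' DK' S V OmegaI d w v k0 x0 in
    let u := a1_u A B AK' BK' CK' DK' S V OmegaI d w v k0 x0 in
    let sigma := a1_sig A B AK' BK' CK' DK' S V OmegaI d w v k0 x0 in
    [/\ (* (a) *)
        forall k, (k0 <= k)%N -> X (x k) /\ U (u k),
        (* (b) *)
        (sigma k0 -> exists T0, (1 <= T0 <= Tmax)%N /\ ~~ sigma (k0 + T0)%N) /\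
        (forall k, (k0 < k)%N -> sigma k -> ~~ sigma k.-1 ->
           exists T, (1 <= T <= Tmax)%N /\ ~~ sigma (k + T)%N)
      & (* (c) *)
        forall k, (k0 <= k)%N -> ~~ sigma k -> S (x k)].
Proof.
move=> pD pW pV pS pX pU iD iW iV iS iX iU SX _ _ SpX _ polyOI OI0 polyOO OO0 Heps I1 I2 I3 O1 O2 O3 O4 tf.
have [DKe Mk] := markovR tf.
have cb : forall (P : set 'cV[R]_n), polytope P -> zero_in_interior P ->
    exists c, 0 <= c /\ forall x, P x -> forall i, `|x i 0| <= c.
  move=> P [_ [M hM]] iP; exists M; split.
    by have := hM 0 (zii0 iP); rewrite enorm0.
  by move=> x Px i; apply: le_trans (coord_le x i) (hM x Px).
have HS := cb S pS iS; have HW := cb W pW iW; have HD := cb D pD iD.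
have V0 := zii0 iV; have U0 := zii0 iU; have S0 := zii0 iS.
have polyS := pS.1.
have DKe' := esym DKe.
have Mk' : forall i, CK' *m AK' ^+ i *m BK' = CK *m AK ^+ i *m BK by move=> i; rewrite Mk.
by apply: (final (DK := DK) (DK' := DK') (OmegaO := OmegaO) (eps_s := eps_s)).
Qed.
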